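(* Let $G$ be a topological group whose topology is induced by a left-invariant metric, and let $H$ be a subgroup of $G$. Then $H$ is strictly R-bounded if and only if $H$ is countable.
   Context: For a topological group $H$ with identity $e$, in the R-game in round $n\in\mathbb N$ player ONE chooses a neighborhood $U_n$ of $e$ and TWO a point $x_n\in H$; TWO wins if $H=\bigcup_n x_nU_n$. $H$ is strictly R-bounded if TWO has a winning strategy. *)

(* Defs.v *)
From Stdlib Require Import Reals List.
Open Scope R_scope.

Definition is_group {G : Type} (mul : G -> G -> G) (inv : G -> G) (e : G) : Prop :=
  (forall x y z, mul x (mul y z) = mul (mul x y) z) /\
  (forall x, mul e x = x) /\ (forall x, mul x e = x) /\
  (forall x, mul (inv x) x = e) /\ (forall x, mul x (inv x) = e).

Definition is_metric {G : Type} (d : G -> G -> R) : Prop :=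
  (forall x y, 0 <= d x y) /\
  (forall x y, d x y = 0 <-> x = y) /\
  (forall x y, d x y = d y x) /\
  (forall x y z, d x z <= d x y + d y z).

Definition left_invariant {G : Type} (mul : G -> G -> G) (d : G -> G -> R) : Prop :=
  forall g x y, d (mul g x) (mul g y) = d x y.

Definition is_topological_group_for_metric {G : Type}
  (mul : G -> G -> G) (inv : G -> G) (d : G -> G -> R) : Prop :=
  (forall x y eps, 0 < eps -> exists delta, 0 < delta /\
     forall x' y', d x x' < delta -> d y y' < delta -> d (mul x y) (mul x' y') < eps) /\
  (forall x eps, 0 < eps -> exists delta, 0 < delta /\
     forall x', d x x' < delta -> d (inv x) (inv x') < eps).

Definition is_subgroup {G : Type} (mul : G -> G -> G) (inv : G -> G) (e : G)
  (H : G -> Prop) : Prop :=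
  H e /\ (forall x y, H x -> H y -> H (mul x y)) /\ (forall x, H x -> H (inv x)).

Definition nbhd_e_in {G : Type} (d : G -> G -> R) (e : G) (H : G -> Prop)
  (U : G -> Prop) : Prop :=
  (forall x, U x -> H x) /\
  exists r, 0 < r /\ forall x, H x -> d e x < r -> U x.

(* A strategy for TWO in the R-game on H: given ONE's moves U_0, ..., U_n
   (as a list, in order), TWO answers a point x_n. TWO's earlier moves are
   determined by the strategy, so this is full (perfect-information) play. *)
Definition strategy (G : Type) := list (G -> Prop) -> G.

Definition history {G : Type} (U : nat -> G -> Prop) (n : nat) : list (G -> Prop) :=
  map U (seq 0 (S n)).

Definition winning_strategy_TWO {G : Type} (mul : G -> G -> G) (d : G -> G -> R)
  (e : G) (H : G -> Prop) (sigma : strategy G) : Prop :=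
  forall U : nat -> G -> Prop,
    (forall n, nbhd_e_in d e H (U n)) ->
    (forall n, H (sigma (history U n))) /\
    (forall h, H h <-> exists n u, U n u /\ h = mul (sigma (history U n)) u).

Definition strictly_R_bounded {G : Type} (mul : G -> G -> G) (d : G -> G -> R)
  (e : G) (H : G -> Prop) : Prop :=
  exists sigma : strategy G, winning_strategy_TWO mul d e H sigma.

(* H is countable (H is nonempty whenever it is a subgroup). *)
Definition countable_set {G : Type} (H : G -> Prop) : Prop :=
  exists f : nat -> G, (forall n, H (f n)) /\ (forall h, H h -> exists n, f n = h).

(* Main.v *)
Require Import Defs.
From Stdlib Require Import Reals List Lra ZArith Cantor ClassicalEpsilon Classical.
Open Scope R_scope.

Fixpoint dec_len (len : nat) (n : nat) : list nat :=
  match len with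
  | O => nil
  | S m => let p := Cantor.of_nat n in fst p :: dec_len m (snd p)
  end.

Definition dec (n : nat) : list nat :=
  let p := Cantor.of_nat n in dec_len (fst p) (snd p).

Lemma dec_len_surj : forall l : list nat, exists n, dec_len (length l) n = l.
Proof.
  induction l as [|a l IH]; simpl.
  - exists O; reflexivity.
  - destruct IH as [m Hm]. exists (Cantor.to_nat (a, m)).
    rewrite Cantor.cancel_of_to; simpl; now rewrite Hm.
Qed.

Lemma dec_surj : forall l : list nat, exists n, dec n = l.
Proof.
  intro l. destruct (dec_len_surj l) as [m Hm].
  exists (Cantor.to_nat (length l, m)). unfold dec.
  rewrite Cantor.cancel_of_to; simpl; exact Hm.
Qed.

Definition rad (k : nat) : R := / (INR k + 1).

Lemma rad_pos k : 0 < rad k.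
Proof. unfold rad. apply Rinv_0_lt_compat. pose proof (pos_INR k). lra. Qed.

Lemma rad_small : forall eps, 0 < eps -> exists k, 2 * rad k < eps.
Proof.
  intros eps Heps.
  destruct (archimed (2 / eps)) as [Hup _].
  assert (Hz : (0 <= up (2/eps))%Z).
  { apply le_IZR. assert (0 < 2/eps) by (apply Rdiv_lt_0_compat; lra). simpl; lra. }
  exists (Z.to_nat (up (2 / eps))).
  unfold rad; rewrite INR_IZR_INZ, Z2Nat.id by exact Hz.
  unfold rad.
  set (u := IZR (up (2/eps))) in *.
  assert (Hu : 2 / eps < u + 1) by lra.
  assert (0 < u + 1).
  { assert (0 < 2/eps) by (apply Rdiv_lt_0_compat; lra). lra. }
  apply (Rmult_lt_reg_r (u + 1)); auto.
  rewrite Rmult_assoc, Rinv_l by lra.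
  unfold Rdiv in Hu.
  apply (Rmult_lt_compat_l eps) in Hu; auto.
  rewrite <- Rmult_assoc, (Rmult_comm eps 2), Rmult_assoc, Rinv_r in Hu by lra.
  lra.
Qed.

Theorem mainTheorem7 (G : Type) (mul : G -> G -> G) (inv : G -> G) (e : G)
  (d : G -> G -> R)
  (Hgrp : is_group mul inv e) (Hmet : is_metric d)
  (Hlinv : left_invariant mul d)
  (Htop : is_topological_group_for_metric mul inv d)
  (H : G -> Prop) (Hsub : is_subgroup mul inv e H) :
  strictly_R_bounded mul d e H <-> countable_set H.
Proof.
  destruct Hgrp as (Hass & Hel & Her & Hil & Hir).
  destruct Hmet as (Hd0 & Hdeq & Hdsym & Htri).
  destruct Hsub as (He & Hmul & Hinv).
  split.
  - intros [sigma Hwin].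
    set (B := fun k : nat => fun x => H x /\ d e x < rad k).
    assert (HB : forall k, nbhd_e_in d e H (B k)).
    { intro k; split. { intros x [Hx _]; exact Hx. }
      exists (rad k); split; [apply rad_pos|]. intros x Hx Hdx; split; auto. }
    set (y := fun s : list nat => sigma (map B s)).
    set (K := fun (s : list nat) (h : G) => forall k, d (y (s ++ k :: nil)) h < rad k).
    assert (Kuniq : forall s h1 h2, K s h1 -> K s h2 -> h1 = h2).
    { intros s h1 h2 K1 K2. apply Hdeq.
      destruct (Req_dec (d h1 h2) 0) as [Z|NZ]; auto.
      assert (Pos : 0 < d h1 h2) by (pose proof (Hd0 h1 h2); lra).
      destruct (rad_small _ Pos) as [k Hk].
      specialize (K1 k); specialize (K2 k); unfold K in K1, K2; cbv beta in K1, K2.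
      pose proof (Htri h1 (y (s ++ k :: nil)) h2) as T.
      rewrite (Hdsym h1 (y _)) in T. lra. }
    assert (Cover : forall h, H h -> exists s, K s h).
    { intros h Hh. apply NNPP; intro Hn.
      assert (Hc : forall s, exists k, ~ d (y (s ++ k :: nil)) h < rad k).
      { intro s. apply NNPP; intro Hn2. apply Hn. exists s. intro k.
        apply NNPP; intro Hn3. apply Hn2. exists k; exact Hn3. }
      destruct (choice _ Hc) as [c Hcs].
      set (pre := fix pre (n : nat) : list nat :=
             match n with O => nil | S m => pre m ++ c (pre m) :: nil end).
      set (kk := fun n => c (pre n)).
      assert (Hpre : forall n, map kk (seq 0 n) = pre n).
      { induction n; [reflexivity|]. rewrite seq_S, map_app, IHn. reflexivity. }
      destruct (Hwin (fun n => B (kk n)) (fun n => HB (kk n))) as [_ Hcov].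
      destruct (proj1 (Hcov h) Hh) as (n & u & Hu & Heq).
      assert (Hhist : history (fun n => B (kk n)) n = map B (pre (S n))).
      { unfold history. rewrite <- Hpre. rewrite map_map. reflexivity. }
      rewrite Hhist in Heq.
      apply (Hcs (pre n)).
      change (d (sigma (map B (pre (S n)))) h < rad (kk n)).
      rewrite Heq. destruct Hu as [_ Hu].
      rewrite <- (Her (sigma (map B (pre (S n))))) at 1.
      rewrite Hlinv. exact Hu. }
    set (P := fun s (h : G) => H h /\ forall h', H h' /\ K s h' -> h' = h).
    assert (Pex : forall s, exists h, P s h).
    { intro s. destruct (classic (exists h', H h' /\ K s h')) as [[h' [H1 H2]]|N].
      - exists h'. split; auto. intros h'' [_ H3]. eapply Kuniq; eauto.
      - exists e. split; auto. intros h' Hh'. exfalso; apply N; exists h'; exact Hh'. }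
    exists (fun n => epsilon (inhabits e) (P (dec n))).
    split.
    + intro n. exact (proj1 (epsilon_spec (inhabits e) (P (dec n)) (Pex (dec n)))).
    + intros h Hh. destruct (Cover h Hh) as [s Hs].
      destruct (dec_surj s) as [n Hn]. exists n.
      pose proof (epsilon_spec (inhabits e) (P (dec n)) (Pex (dec n))) as [_ Hp].
      symmetry. apply Hp. rewrite Hn. auto.
  - intros [f [Hf Hsurj]].
    exists (fun l => f (pred (length l))).
    intros U HU. split.
    + intro n. apply Hf.
    + intro h. split.
      * intro Hh. destruct (Hsurj h Hh) as [n Hn]. exists n, e.
        unfold history. rewrite length_map, length_seq. simpl.
        split; [|rewrite Her; auto].
        destruct (HU n) as [_ [r [Hr Hball]]]. apply Hball; auto.
        rewrite (proj2 (Hdeq e e) eq_refl). exact Hr.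
      * intros (n & u & Hu & Heq). subst h. apply Hmul; [apply Hf|].
        exact (proj1 (HU n) u Hu).
Qed.
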